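(* Let $\pi$ be an irreducible bounded $*$-representation of $\mathcal{A}(\Sigma^{2n+1}_q)$ on a Hilbert space $\mathcal{H}$ with $\pi(y_{n+1})\ne0$. Then: (i) $\pi(y_{n+1})$ is injective; (ii) there exists a vector $\xi\neq0$ in $\mathcal{H}$ such that $\pi(y_i)\xi=0$ for all $1\le i\le n$.
   Context: Let $0<q<1$, $n\ge1$. $\mathcal{A}(\Sigma^{2n+1}_q)$ is the quotient of the quantum sphere algebra $\mathcal{A}(S^{4n-1}_q)$ (the complex unital $*$-algebra generated by $x_1,\dots,x_n,y_1,\dots,y_n$ and adjoints subject to: $x_ix_j=q^{-1}x_jx_i$ ($i<j$); $y_iy_j=q^{-1}y_jy_i$ ($i>j$); $x_iy_j=q^{-1}y_jx_i$ ($i\ne j$); $y_ix_i=q^2x_iy_i+(q^2-1)\sum_{k=1}^{i-1}q^{i-k}x_ky_k$; $x_ix_i^*=x_i^*x_i+(1-q^2)\sum_{k=1}^{i-1}x_k^*x_k$; $y_iy_i^*=y_i^*y_i+(1-q^2)\{q^{2(n+1-i)}x_i^*x_i+\sum_{k=1}^n x_k^*x_k+\sum_{k=i+1}^n y_k^*y_k\}$; $x_iy_i^*=q^2y_i^*x_i$; $x_ix_j^*=qx_j^*x_i$ ($i\ne j$); $y_iy_j^*=qy_j^*y_i-(q^2-1)q^{2n+2-i-j}x_i^*x_j$ ($i\neq j$); $x_iy_j^*=qy_j^*x_i$ ($i<j$); $x_iy_j^*=qy_j^*x_i+(q^2-1)q^{i-j}y_i^*x_j$ ($i>j$); $\sum_{i=1}^n(x_i^*x_i+y_i^*y_i)=1$)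 by the two-sided $*$-ideal generated by $x_1,\dots,x_{n-1}$; in it $y_1,\dots,y_n$ denote the images of $y_1,\dots,y_n$ and $y_{n+1}$ the image of $x_n$. In this quotient $y_{n+1}$ is normal and (with adjoints): $y_iy_j=q^{-1}y_jy_i$, $y_i^*y_j=q^{-1}y_jy_i^*$ for $i>j$, $(i,j)\ne(n+1,n)$; $y_{n+1}y_n=q^{-2}y_ny_{n+1}$, $y_{n+1}^*y_n=q^{-2}y_ny_{n+1}^*$; $[y_i,y_i^*]=(1-q^2)\sum_{k=i+1}^{n+1}y_k^*y_k$ ($i\ne n$); $[y_n,y_n^*]=(1-q^4)y_{n+1}^*y_{n+1}$; $\sum_{i=1}^{n+1}y_i^*y_i=1$. *)

(* Defs.v *)
From HB Require Import structures.
From mathcomp Require Import all_boot all_order all_algebra.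
From mathcomp Require Import complex.
From mathcomp Require Import reals.
Set Implicit Arguments. Unset Strict Implicit. Unset Printing Implicit Defensive.
Import Order.TTheory GRing.Theory Num.Theory.
Local Open Scope ring_scope.

Section Hilbert.
Variables (R : realType) (V : lmodType R[i]) (ip : V -> V -> R[i]).

Definition inner_product : Prop :=
  [/\ (forall x y z, ip (x + y) z = ip x z + ip y z),
      (forall (a : R[i]) x y, ip (a *: x) y = a * ip x y),
      (forall x y, ip y x = (ip x y)^*),
      (forall x, 0 <= ip x x) &
      (forall x, ip x x = 0 -> x = 0)].

Definition hnorm (x : V) : R := Num.sqrt (complex.Re (ip x x)).

Definition converges_to (u : nat -> V) (l : V) : Prop :=
  forall e : R, 0 < e -> exists N, forall m, (N <= m)%N -> hnorm (u m - l) < e.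

Definition cauchy_seq (u : nat -> V) : Prop :=
  forall e : R, 0 < e -> exists N, forall m k, (N <= m)%N -> (N <= k)%N ->
    hnorm (u m - u k) < e.

Definition hilbert_space : Prop :=
  inner_product /\
  (forall u, cauchy_seq u -> exists l, converges_to u l).

Definition bounded_op (T : V -> V) : Prop :=
  (forall (a : R[i]) x y, T (a *: x + y) = a *: T x + T y) /\
  (exists M : R, forall x, hnorm (T x) <= M * hnorm x).

Definition is_adjoint (T S : V -> V) : Prop :=
  forall x y, ip (T x) y = ip x (S y).

Definition closed_subspace (W : V -> Prop) : Prop :=
  [/\ W 0,
      (forall (a : R[i]) x y, W x -> W y -> W (a *: x + y)) &
      (forall u l, (forall m, W (u m)) -> converges_to u l -> W l)].

Definition irreducible_family (I : Type) (ops : I -> V -> V) : Prop :=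
  forall W : V -> Prop, closed_subspace W ->
    (forall k x, W x -> W (ops k x)) ->
    (forall x, W x -> x = 0) \/ (forall x, W x).

End Hilbert.

Section Sphere.
Variables (R : realType) (V : lmodType R[i]).
Variables (n : nat) (q : R).
(* X i, Y i, Xs i, Ys i = pi(x_i), pi(y_i), pi(x_i^* ), pi(y_i^* ), 1 <= i <= n *)
Variables (X Y Xs Ys : nat -> V -> V).

Local Notation Q := ((q%:C)%C : R[i]).

(* The defining relations of A(S^{4n-1}_q), evaluated at every vector v. *)
Definition sphere_relations : Prop :=
  (
   (forall i j v, (1 <= i)%N -> (i < j)%N -> (j <= n)%N ->
      X i (X j v) = Q^-1 *: X j (X i v)) /\
   (forall i j v, (1 <= j)%N -> (j < i)%N -> (i <= n)%N ->
      Y i (Y j v) = Q^-1 *: Y j (Y i v)) /\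
   (forall i j v, (1 <= i <= n)%N -> (1 <= j <= n)%N -> i != j ->
      X i (Y j v) = Q^-1 *: Y j (X i v)) /\
   (forall i v, (1 <= i <= n)%N ->
      Y i (X i v) = Q ^+ 2 *: X i (Y i v)
        + (Q ^+ 2 - 1) *: \sum_(1 <= k < i) Q ^+ (i - k) *: X k (Y k v)) /\
   (forall i v, (1 <= i <= n)%N ->
      X i (Xs i v) = Xs i (X i v)
        + (1 - Q ^+ 2) *: \sum_(1 <= k < i) Xs k (X k v)) /\
   (forall i v, (1 <= i <= n)%N ->
      Y i (Ys i v) = Ys i (Y i v)
        + (1 - Q ^+ 2) *: (Q ^+ (2 * (n + 1 - i)) *: Xs i (X i v)
             + \sum_(1 <= k < n.+1) Xs k (X k v)
             + \sum_(i.+1 <= k < n.+1) Ys k (Y k v))) /\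
   (forall i v, (1 <= i <= n)%N -> X i (Ys i v) = Q ^+ 2 *: Ys i (X i v)) /\
   (forall i j v, (1 <= i <= n)%N -> (1 <= j <= n)%N -> i != j ->
      X i (Xs j v) = Q *: Xs j (X i v)) /\
   (forall i j v, (1 <= i <= n)%N -> (1 <= j <= n)%N -> i != j ->
      Y i (Ys j v) = Q *: Ys j (Y i v)
        - (Q ^+ 2 - 1) *: (Q ^+ (2 * n + 2 - i - j) *: Xs i (X j v))) /\
   (forall i j v, (1 <= i)%N -> (i < j)%N -> (j <= n)%N ->
      X i (Ys j v) = Q *: Ys j (X i v)) /\
   (forall i j v, (1 <= j)%N -> (j < i)%N -> (i <= n)%N ->
      X i (Ys j v) = Q *: Ys j (X i v)
        + (Q ^+ 2 - 1) *: (Q ^+ (i - j) *: Ys i (X j v))) /\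
   (forall v, \sum_(1 <= i < n.+1) (Xs i (X i v) + Ys i (Y i v)) = v)).

Definition gens (k : nat * nat) : V -> V :=
  match k.1 with
  | 0 => X k.2 | 1 => Y k.2 | 2 => Xs k.2 | _ => Ys k.2
  end.

End Sphere.

(* Main.v *)
Require Import Defs.
From HB Require Import structures.
From mathcomp Require Import all_boot all_order all_algebra.
From mathcomp Require Import complex.
From mathcomp Require Import reals.
From mathcomp Require Import ring lra.
From mathcomp Require classical_sets.
Import Order.TTheory GRing.Theory Num.Theory.
Local Open Scope ring_scope.
Module P1.

Set Implicit Arguments. Unset Strict Implicit.
Notation cRe := complex.Re.

Lemma cReD (R : realType) (a b : R[i]) : cRe (a + b) = cRe a + cRe b.
Proof. by case: a => ? ?; case: b. Qed.
Lemma cRe0 (R : realType) : cRe (0 : R[i]) = 0.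
Proof. by []. Qed.
Lemma cReN (R : realType) (a : R[i]) : cRe (- a) = - cRe a.
Proof. by case: a. Qed.
Lemma cReB (R : realType) (a b : R[i]) : cRe (a - b) = cRe a - cRe b.
Proof. by rewrite cReD cReN. Qed.
Lemma cReC (R : realType) (t : R) : cRe (t%:C)%C = t.
Proof. by []. Qed.
Lemma cReM (R : realType) (t : R) (a : R[i]) : cRe ((t%:C)%C * a) = t * cRe a.
Proof. case: a => x y /=; ring. Qed.
Lemma conjE (R : realType) (a : R[i]) : a^* = conjc a.
Proof. by []. Qed.
Lemma cRe_conj (R : realType) (a : R[i]) : cRe (a^*) = cRe a.
Proof. by rewrite conjE; case: a. Qed.
Lemma conj_real (R : realType) (t : R) : ((t%:C)%C : R[i])^* = (t%:C)%C.
Proof. by rewrite conjE conjc_real. Qed.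
Lemma cRe_sum (R : realType) (I : Type) (r : seq I) (P : pred I) (F : I -> R[i]) :
  cRe (\sum_(i <- r | P i) F i) = \sum_(i <- r | P i) cRe (F i).
Proof. exact: (big_morph _ (@cReD R) (@cRe0 R)). Qed.
Lemma real_ge0 (R : realType) (a : R[i]) : 0 <= a -> a = ((cRe a)%:C)%C.
Proof. case: a => x y; rewrite lecE /= => /andP[/eqP hy _].
by apply/eqP; rewrite eq_complex /= -hy !eqxx. Qed.
Lemma conjM (R : realType) (a b : R[i]) : (a * b)^* = a^* * b^*.
Proof. exact: rmorphM. Qed.
Lemma conjD (R : realType) (a b : R[i]) : (a + b)^* = a^* + b^*.
Proof. exact: rmorphD. Qed.
Lemma conjK (R : realType) (a : R[i]) : a^*^* = a.
Proof. exact: conjCK. Qed.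


Section IP.
Variables (R : realType) (V : lmodType R[i]) (ip : V -> V -> R[i]).
Hypothesis Hip : inner_product ip.

Definition nn (x : V) : R := cRe (ip x x).

Lemma ipDl x y w : ip (x + y) w = ip x w + ip y w.
Proof. by case: Hip => H _ _ _ _; apply: H. Qed.
Lemma ipZl (a : R[i]) x w : ip (a *: x) w = a * ip x w.
Proof. by case: Hip => _ H _ _ _; apply: H. Qed.
Lemma ipC x y : ip y x = (ip x y)^*.
Proof. by case: Hip => _ _ H _ _; apply: H. Qed.
Lemma ip_ge0 x : 0 <= ip x x.
Proof. by case: Hip => _ _ _ H _; apply: H. Qed.
Lemma ip_eq0 x : ip x x = 0 -> x = 0.
Proof. by case: Hip => _ _ _ _ H; apply: H. Qed.

Lemma ip0l y : ip 0 y = 0.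
Proof. by rewrite -(scale0r (0:V)) ipZl mul0r. Qed.
Lemma ipNl x y : ip (- x) y = - ip x y.
Proof. by rewrite -scaleN1r ipZl mulN1r. Qed.
Lemma ipBl x x' y : ip (x - x') y = ip x y - ip x' y.
Proof. by rewrite ipDl ipNl. Qed.
Lemma ipDr x y w : ip w (x + y) = ip w x + ip w y.
Proof. by rewrite ipC ipDl conjD -!ipC. Qed.
Lemma ipZr (a : R[i]) x w : ip w (a *: x) = a^* * ip w x.
Proof. by rewrite ipC ipZl conjM -ipC. Qed.
Lemma ip0r y : ip y 0 = 0.
Proof. by rewrite ipC ip0l conjC0. Qed.
Lemma ipNr x y : ip y (- x) = - ip y x.
Proof. by rewrite -scaleN1r ipZr rmorphN1 mulN1r. Qed.
Lemma ipBr x x' y : ip y (x - x') = ip y x - ip y x'.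
Proof. by rewrite ipDr ipNr. Qed.

Lemma ipE x : ip x x = ((nn x)%:C)%C.
Proof. exact: real_ge0 (ip_ge0 x). Qed.
Lemma nn_ge0 x : 0 <= nn x.
Proof. by have := ip_ge0 x; rewrite ipE lecR. Qed.
Lemma nn_eq0 x : nn x = 0 -> x = 0.
Proof. by move=> h; apply: ip_eq0; rewrite ipE h. Qed.
Lemma nn0 : nn 0 = 0.
Proof. by rewrite /nn ip0l. Qed.
Lemma ip_sum_l (I : Type) (r : seq I) (P : pred I) (F : I -> V) w :
  ip (\sum_(i <- r | P i) F i) w = \sum_(i <- r | P i) ip (F i) w.
Proof. exact: (big_morph (fun x => ip x w) (fun x y => ipDl x y w) (ip0l w)). Qed.

Lemma nnD x y : nn (x + y) = nn x + nn y + 2 * cRe (ip x y).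
Proof.
rewrite /nn ipDl !ipDr !cReD [ip y x]ipC cRe_conj; ring.
Qed.
Lemma nnN x : nn (- x) = nn x.
Proof. by rewrite /nn ipNl ipNr opprK. Qed.
Lemma nnB x y : nn (x - y) = nn x + nn y - 2 * cRe (ip x y).
Proof. by rewrite nnD nnN ipNr cReN; ring. Qed.
Lemma nnZ (t : R) x : nn ((t%:C)%C *: x) = t ^+ 2 * nn x.
Proof.
rewrite /nn ipZl ipZr conj_real mulrA.
have -> : ((t%:C)%C * (t%:C)%C : R[i]) = ((t ^+ 2)%:C)%C by rewrite -rmorphM expr2.
by rewrite cReM.
Qed.
Lemma cRe_ipZr (t : R) x y : cRe (ip x ((t%:C)%C *: y)) = t * cRe (ip x y).
Proof. by rewrite ipZr conj_real cReM. Qed.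

Lemma CS x y : cRe (ip x y) ^+ 2 <= nn x * nn y.
Proof.
have [/nn_eq0 ->|Hy] := eqVneq (nn y) 0.
  by rewrite ip0r nn0 /= mulr0 expr2 mulr0.
have Ny : 0 < nn y by rewrite lt_def Hy nn_ge0.
set r := cRe (ip x y).
set t := r / nn y.
have tN : t * nn y = r by rewrite /t divfK.
have := nn_ge0 (x - (t%:C)%C *: y).
rewrite nnB nnZ cRe_ipZr -/r => h.
have := nn_ge0 x => hx.
nra.
Qed.

Definition hn (x : V) : R := Num.sqrt (nn x).

Lemma hn_ge0 x : 0 <= hn x.
Proof. exact: sqrtr_ge0. Qed.
Lemma hn_sq x : hn x ^+ 2 = nn x.
Proof. by rewrite sqr_sqrtr // nn_ge0. Qed.
Lemma hn_le x (c : R) : 0 <= c -> nn x <= c ^+ 2 -> hn x <= c.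
Proof. by move=> c0 h; rewrite -(ger0_norm c0) -sqrtr_sqr ler_sqrt // sqr_ge0. Qed.
Lemma hn_eq0 x : hn x = 0 -> x = 0.
Proof. move=> /eqP; rewrite sqrtr_eq0 => h; apply: nn_eq0; apply/eqP; rewrite eq_le h nn_ge0. by []. Qed.
Lemma hnE x : hnorm ip x = hn x.
Proof. by []. Qed.

Lemma hn_triangle x y : hn (x + y) <= hn x + hn y.
Proof.
apply: hn_le; first by rewrite addr_ge0 ?hn_ge0.
rewrite nnD sqrrD !hn_sq.
have h := CS x y. rewrite -!hn_sq in h.
have := hn_ge0 x; have := hn_ge0 y => h1 h2.
set r := cRe (ip x y) in h *.
have hp : 0 <= hn x * hn y by rewrite mulr_ge0.
have hr : r <= hn x * hn y.
  case: (lerP r (hn x * hn y)) => // hlt.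
  have : (hn x * hn y) ^+ 2 < r ^+ 2.
    nra.
  by rewrite exprMn => /(le_lt_trans h); rewrite ltxx.
rewrite -mulr_natl. lra.
Qed.
Lemma hnN x : hn (- x) = hn x.
Proof. by rewrite /hn nnN. Qed.
Lemma hn_sym x y : hn (x - y) = hn (y - x).
Proof. by rewrite -hnN opprB. Qed.
Lemma hn_tri3 x y w : hn (x - w) <= hn (x - y) + hn (y - w).
Proof. have -> : x - w = (x - y) + (y - w) by rewrite addrA subrK. exact: hn_triangle. Qed.

End IP.

End P1.
Import P1.
Set Implicit Arguments. Unset Strict Implicit.

Lemma bernoulli (R : realType) (h : R) (N : nat) : 0 <= h -> 1 + N%:R * h <= (1 + h) ^+ N.
Proof.
move=> h0; elim: N => [|N IH]; first by rewrite mul0r addr0 expr0.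
rewrite exprS -natr1.
have hp : 0 <= (1 + h) ^+ N by rewrite exprn_ge0 // addr_ge0.
have : 0 <= N%:R * h :> R by rewrite mulr_ge0.
nra.
Qed.

Lemma geom_small (R : realType) (q c : R) : 0 < q -> q < 1 -> 0 < c ->
  exists N : nat, q ^+ N < c.
Proof.
move=> q0 q1 c0.
set h := q^-1 - 1.
have hq : q * (1 + h) = 1 by rewrite /h addrC subrK mulfV // gt_eqF.
have h0 : 0 < h by rewrite /h subr_gt0 invf_gt1.
have b0 : 0 <= (c * h)^-1 by rewrite invr_ge0 ltW // mulr_gt0.
have := archi_boundP b0.
set N := Num.Def.archi_bound _ => HN.
exists N.
have := bernoulli N (ltW h0) => hb.
have hNh : 1 < c * h * N%:R.
  have ch : 0 < c * h by rewrite mulr_gt0.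
  by rewrite -[X in X < _](mulfV (lt0r_neq0 ch)) ltr_pM2l //.
have hqn : q ^+ N * (1 + h) ^+ N = 1 by rewrite -exprMn hq expr1n.
have : 0 < q ^+ N by rewrite exprn_gt0.
have : 0 <= (1 + h) ^+ N by rewrite exprn_ge0 // addr_ge0 // ltW.
set P := (1 + h) ^+ N. set Q := q ^+ N.
have hqn' : Q * P = 1 by rewrite /Q /P -exprMn hq expr1n.
move: hb hNh hqn' c0 h0. clear. move=> hb hNh hqn c0 h0 P0 Q0.
have hc : c * (1 + N%:R * h) <= c * P by rewrite ler_pM2l.
rewrite ltNge; apply/negP => hQc.
have : c * P <= Q * P by rewrite ler_wpM2r.
nra.
Qed.

Lemma geom_small2 (R : realType) (q e k : R) : 0 < q -> q < 1 -> 0 < e -> 0 <= k ->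
  exists N : nat, k * q ^+ N < e.
Proof.
move=> q0 q1 e0 k0.
have [N hN] := geom_small q0 q1 (divr_gt0 e0 (ltr_wpDl k0 ltr01) : 0 < e / (k + 1)).
exists N.
have qN : 0 <= q ^+ N by rewrite exprn_ge0 // ltW.
have k1 : 0 < k + 1 by rewrite ltr_wpDl.
have : k * q ^+ N <= k * (e / (k + 1)) by rewrite ler_wpM2l // ltW.
have : k * (e / (k + 1)) < e.
  rewrite mulrA ltr_pdivrMr // mulrDr mulr1; lra.
lra.
Qed.

Section Core.
Variables (R : realType) (V : lmodType R[i]) (ip : V -> V -> R[i]).
Hypothesis Hip : inner_product ip.
Hypothesis Hcomp : forall u, cauchy_seq ip u -> exists l, converges_to ip u l.
Variables (q : R) (z zs : V -> V).
Hypotheses (q0 : 0 < q) (q1 : q < 1).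
Hypothesis Hz : forall (a : R[i]) x y, z (a *: x + y) = a *: z x + z y.
Hypothesis Hzs : forall (a : R[i]) x y, zs (a *: x + y) = a *: zs x + zs y.
Hypothesis Hadj : is_adjoint ip z zs.
Hypothesis Hnormal : forall v, z (zs v) = zs (z v).
Hypothesis P1 : forall w, nn ip (z w) <= nn ip w.
Hypothesis GAP : forall b, 0 <= b -> (forall w, nn ip (z w) <= b * nn ip w) ->
  forall v, nn ip (z v) - nn ip (z (z v)) <= q ^+ 2 * b * (nn ip v - nn ip (z v)).
Hypothesis Hnz : exists v, z v != 0.

Lemma lin0 (T : V -> V) : (forall (a : R[i]) x y, T (a *: x + y) = a *: T x + T y) -> T 0 = 0.
Proof.
move=> HT; have h := HT 1 0 0; rewrite !scale1r addr0 in h.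
have : T 0 + T 0 = T 0 + 0 by rewrite addr0 -h.
by move/addrI.
Qed.
Lemma linB (T : V -> V) : (forall (a : R[i]) x y, T (a *: x + y) = a *: T x + T y) ->
  forall x y, T (x - y) = T x - T y.
Proof.
move=> HT x y; have := HT (-1) y x; rewrite !scaleN1r => h.
by rewrite [x - y]addrC [T x - T y]addrC -h.
Qed.

Local Notation nn := (P1.nn ip).
Local Notation hn := (P1.hn ip).

Lemma adj_swap x y : ip (zs y) x = ip y (z x).
Proof. by rewrite (ipC Hip) -Hadj -(ipC Hip). Qed.
Lemma nn_zs w : nn (zs w) = nn (z w).
Proof. by rewrite /P1.nn -Hadj Hnormal adj_swap. Qed.
Lemma ip_A w : ip w (zs (z w)) = ip (z w) (z w).
Proof. by rewrite -Hadj. Qed.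

Local Notation A w := (zs (z w)).
Local Notation g w := (nn w - nn (z w)).

Lemma g_ge0 w : 0 <= g w.
Proof. by rewrite subr_ge0 P1. Qed.
Lemma gz v : g (z v) <= q ^+ 2 * g v.
Proof.
have hb : forall w, nn (z w) <= 1 * nn w by move=> w; rewrite mul1r P1.
by have := GAP ler01 hb v; rewrite mulr1. Qed.
Lemma gA w : g (A w) <= q ^+ 2 * g w.
Proof.
have -> : g (A w) = g (z (z w)) by rewrite nn_zs Hnormal nn_zs.
have h1 := gz (z w); have h2 := gz w; have h3 := g_ge0 w; have h4 := g_ge0 (z w).
have hq2 : q ^+ 2 <= 1 by rewrite expr_le1 // ltW.
have hq3 : 0 <= q ^+ 2 by rewrite sqr_ge0.
have : q ^+ 2 * g (z w) <= g (z w) by rewrite ler_piMl.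
lra.
Qed.
Lemma nn_A w : nn (A w) <= nn w.
Proof. by rewrite nn_zs; apply: le_trans (P1 _) (P1 _). Qed.
Lemma step w : nn (w - A w) <= g w.
Proof.
rewrite (nnB Hip) ip_A -/(P1.nn ip (z w)) nn_zs.
have := P1 (z w). lra.
Qed.


Lemma good_x d : 0 < d -> exists x, 0 < nn x /\ g x < d * nn x.
Proof.
move=> d0.
have z0 : z 0 = 0 := lin0 Hz.
have [v0 hv0] := Hnz.
have v0n : 0 < nn v0.
  rewrite lt_def nn_ge0 // andbT; apply/eqP => /(nn_eq0 Hip) h.
  by move: hv0; rewrite h z0 eqxx.
have zv0n : 0 < nn (z v0).
  by rewrite lt_def nn_ge0 // andbT; apply/eqP => /(nn_eq0 Hip) h; move: hv0; rewrite h eqxx.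
pose S := (fun r : R => exists u, 0 < nn u /\ r = nn (z u) / nn u).
have hS : classical_sets.has_sup S.
  split; first by exists (nn (z v0) / nn v0); exists v0.
  exists 1 => r [u [hu ->]]; by rewrite ler_pdivrMr // mul1r P1.
set a := reals.sup S.
have ha : forall w, nn (z w) <= a * nn w.
  move=> w; have [h0|hw] := eqVneq (nn w) 0.
    by rewrite (nn_eq0 Hip h0) z0 (nn0 Hip) mulr0.
  have wp : 0 < nn w by rewrite lt_def hw nn_ge0.
  have : nn (z w) / nn w <= a by apply: (reals.sup_upper_bound hS); exists w.
  by rewrite ler_pdivrMr.
have a0 : 0 < a.
  have : nn (z v0) / nn v0 <= a by apply: (reals.sup_upper_bound hS); exists v0.
  by apply: lt_le_trans; rewrite divr_gt0.
have a1 : 1 <= a.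
  case: (lerP 1 a) => // a1; exfalso.
  have hq2 : q ^+ 2 < 1 by rewrite expr_lt1 // ltW.
  have hq3 : 0 < q ^+ 2 by rewrite exprn_gt0.
  set e := (1 - q ^+ 2) * a * (1 - a) / 2.
  have e0 : 0 < e by rewrite divr_gt0 // !mulr_gt0 // subr_gt0.
  have [r [u [hu ->]] hr] := reals.sup_adherent e0 hS.
  have h1 := GAP (ltW a0) ha u.
  have h2 := ha (z u).
  have h3 : (a - e) * nn u < nn (z u) by rewrite -ltr_pdivlMr.
  set s := nn (z u) in h1 h2 h3. set t := nn u in h1 h3 hu.
  set K := 1 - a + q ^+ 2 * a.
  have K0 : 0 < K by rewrite /K; nra.
  have h4 : K * s <= q ^+ 2 * a * t by rewrite /K; nra.
  have h5 : K * (a - e) * t < K * s by rewrite -mulrA ltr_pM2l.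
  have h6 : K * (a - e) < q ^+ 2 * a.
    by rewrite -(ltr_pM2r hu); apply: lt_le_trans h5 h4.
  have h7 : 2 * e = (1 - q ^+ 2) * a * (1 - a) by rewrite /e mulrC divfK // pnatr_eq0.
  rewrite /K in h6; nra.
have [r [u [hu ->]] hr] := reals.sup_adherent d0 hS.
exists u; split => //.
have : (1 - d) * nn u < nn (z u) by rewrite -ltr_pdivlMr // (le_lt_trans _ hr) // lerD2r.
lra.
Qed.


Lemma core_exists : exists xi, xi != 0 /\ nn (z xi) = nn xi.
Proof.
have q1' : 0 < 1 - q by rewrite subr_gt0.
have [x [tx hx]] := good_x (exprn_gt0 2 q1').
have gx0 := g_ge0 x.
set gm := Num.sqrt (g x).
have gm0 : 0 <= gm := sqrtr_ge0 _.
have gm2 : gm ^+ 2 = g x by rewrite sqr_sqrtr.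
pose v m := iter m (fun w => zs (z w)) x.
have hv : forall m, v m.+1 = A (v m) by [].
have hq2 : 0 <= q ^+ 2 by rewrite sqr_ge0.
have hg : forall m, g (v m) <= (q ^+ 2) ^+ m * g x.
  elim=> [|m IH]; first by rewrite expr0 mul1r.
  rewrite hv; apply: le_trans (gA _) _.
  by rewrite [(q ^+ 2) ^+ m.+1]exprS -mulrA ler_wpM2l.
have qm0 : forall m, 0 <= q ^+ m by move=> m; rewrite exprn_ge0 // ltW.
have hst : forall m, hn (v m - v m.+1) <= q ^+ m * gm.
  move=> m; apply: hn_le => //; first by rewrite mulr_ge0.
  rewrite hv; apply: le_trans (step _) _; apply: le_trans (hg m) _.
  by rewrite [X in _ <= X]exprMn gm2 exprAC.
have hn0 : hn 0 = 0 by rewrite /P1.hn (nn0 Hip) sqrtr0.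
have hch : forall k j, hn (v k - v (k + j)%N) <= gm * (q ^+ k - q ^+ (k + j)) / (1 - q).
  move=> k; elim=> [|j IH]; first by rewrite addn0 !subrr hn0 mulr0 mul0r.
  apply: le_trans (hn_tri3 Hip _ (v (k + j)%N) _) _.
  rewrite addnS; apply: le_trans (lerD IH (hst _)) _.
  rewrite exprSr le_eqVlt; apply/orP; left; apply/eqP; field.
  by rewrite lt0r_neq0.
have hch' : forall k j, hn (v k - v (k + j)%N) <= gm * q ^+ k / (1 - q).
  move=> k j; apply: le_trans (hch k j) _.
  by rewrite ler_pM2r ?invr_gt0 // ler_wpM2l // lerBlDr lerDl qm0.
have hcauchy : cauchy_seq ip v.
  move=> e e0.
  have k0 : 0 <= 2 * gm / (1 - q) by rewrite divr_ge0 ?mulr_ge0 // ltW.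
  have [N hN] := geom_small2 q0 q1 e0 k0.
  exists N => m k hm hk.
  rewrite hnE; apply: le_lt_trans (hn_tri3 Hip _ (v N) _) _.
  rewrite (hn_sym Hip (v m)) -(subnKC hm) -(subnKC hk).
  apply: le_lt_trans (lerD (hch' _ _) (hch' _ _)) _.
  move: hN; rewrite -!mulrA mulrC -!mulrA. lra.
have [xi hxi] := Hcomp hcauchy.
have hB : forall w, hn (w - A w) <= 2 * hn w.
  move=> w; apply: le_trans (hn_triangle Hip _ _) _.
  rewrite (hnN Hip); have : hn (A w) <= hn w.
    by apply: hn_le; rewrite ?hn_ge0 // (hn_sq Hip); exact: nn_A.
  lra.
have hlinB : forall a b, (a - A a) - (b - A b) = (a - b) - A (a - b).
  move=> a b; rewrite (linB Hz) (linB Hzs) !opprD !opprK addrACA.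
  by congr (_ + _); rewrite addrC.
have hA : A xi = xi.
  have : hn (xi - A xi) <= 0.
    apply/ler_addgt0Pr => e e0; rewrite add0r.
    have e2 : 0 < e / 2 by rewrite divr_gt0.
    have e4 : 0 < e / 4 by rewrite divr_gt0.
    have [N1 hN1] := geom_small2 q0 q1 e2 gm0.
    have [N2 hN2] := hxi _ e4.
    have hm := hN2 (maxn N1 N2) (leq_maxr _ _).
    rewrite hnE hn_sym // in hm.
    have hq : q ^+ (maxn N1 N2) <= q ^+ N1 by rewrite ler_wiXn2l // ?ltW // leq_maxl.
    rewrite -[xi - A xi]subr0; apply: le_trans (hn_tri3 Hip _ (v (maxn N1 N2) - A (v (maxn N1 N2))) 0) _.
    rewrite hlinB subr0; apply: le_trans (lerD (hB _) (hst _)) _.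
    have : gm * q ^+ maxn N1 N2 <= gm * q ^+ N1 by rewrite ler_wpM2l.
    lra.
  rewrite le_eqVlt ltNge hn_ge0 orbF => /eqP /(hn_eq0 Hip) /eqP.
  by rewrite subr_eq0 => /eqP.
exists xi; split.
  apply/eqP => hxi0.
  have : hn x <= gm / (1 - q).
    apply/ler_addgt0Pr => e e0.
    have [N hN] := hxi _ e0.
    have := hN N (leqnn N); rewrite hnE hxi0 => h1.
    have h2 := hch' 0 N; rewrite expr0 mulr1 add0n /= in h2.
    have := hn_triangle Hip (x - v N) (v N - 0); rewrite addrA subrK subr0 => h3.
    rewrite subr0 in h1; change (v 0) with x in h2. rewrite subr0 in h3. lra.
  rewrite ler_pdivlMr // => h.
  have h' : (hn x * (1 - q)) ^+ 2 <= gm ^+ 2.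
    by rewrite ler_sqr // ?nnegrE ?mulr_ge0 ?hn_ge0 // ltW.
  rewrite exprMn (hn_sq Hip) gm2 in h'.
  lra.
by rewrite /P1.nn -ip_A hA.
Qed.

End Core.
Set Implicit Arguments. Unset Strict Implicit.

Lemma adjS (R : realType) (V : lmodType R[i]) (ip : V -> V -> R[i]) (T S : V -> V) :
  inner_product ip -> is_adjoint ip T S -> forall x y, ip (S y) x = ip y (T x).
Proof. by move=> Hip Hadj x y; rewrite (ipC Hip) -Hadj -(ipC Hip). Qed.

Lemma linD (R : realType) (V : lmodType R[i]) (T : V -> V) :
  (forall (a : R[i]) x y, T (a *: x + y) = a *: T x + T y) -> forall x y, T (x + y) = T x + T y.
Proof. by move=> HT x y; have := HT 1 x y; rewrite !scale1r. Qed.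
Lemma linZ (R : realType) (V : lmodType R[i]) (T : V -> V) :
  (forall (a : R[i]) x y, T (a *: x + y) = a *: T x + T y) -> forall a x, T (a *: x) = a *: T x.
Proof. by move=> HT a x; rewrite -(addr0 (a *: x)) HT (lin0 HT) addr0. Qed.
Lemma lin_sum (R : realType) (V : lmodType R[i]) (T : V -> V) :
  (forall (a : R[i]) x y, T (a *: x + y) = a *: T x + T y) ->
  forall (I : Type) (r : seq I) (P : pred I) (F : I -> V),
  T (\sum_(i <- r | P i) F i) = \sum_(i <- r | P i) T (F i).
Proof. move=> HT; exact: (big_morph T (linD HT) (lin0 HT)). Qed.

Lemma sum_lt_zero (R : realType) (V : lmodType R[i]) (n : nat) (F : nat -> V) :
  (forall k, (1 <= k)%N -> (k < n)%N -> F k = 0) -> \sum_(1 <= k < n) F k = 0.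
Proof. by move=> H; rewrite big_nat_cond big1 // => k /andP[/andP[h1 h2] _]; apply: H. Qed.

Lemma Q_neq0 (R : realType) (q : R) : 0 < q -> ((q%:C)%C : R[i]) != 0.
Proof. by move=> q0; apply/eqP => /(congr1 (@complex.Re R)) /= h; move: q0; rewrite h ltxx. Qed.

Lemma cRe_real2 (R : realType) (t : R) (w : R[i]) :
  cRe ((t%:C)%C * (((t%:C)%C)^* * w)) = t ^+ 2 * cRe w.
Proof.
rewrite conj_real mulrA.
have -> : ((t%:C)%C * (t%:C)%C : R[i]) = ((t ^+ 2)%:C)%C by rewrite -rmorphM expr2.
by rewrite cReM.
Qed.
Lemma realX2 (R : realType) (t : R) : ((t%:C)%C : R[i]) ^+ 2 = ((t ^+ 2)%:C)%C.
Proof. by rewrite -rmorphXn. Qed.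

Unset Implicit Arguments.
Unset Strict Implicit.

Theorem lemma1p6 (R : realType) (V : lmodType R[i]) (ip : V -> V -> R[i])
    (n : nat) (q : R) (X Y Xs Ys : nat -> V -> V) :
  (1 <= n)%N -> 0 < q -> q < 1 ->
  hilbert_space ip ->
  (forall i, (1 <= i <= n)%N ->
     [/\ bounded_op ip (X i), bounded_op ip (Y i),
         bounded_op ip (Xs i) & bounded_op ip (Ys i)] /\
     is_adjoint ip (X i) (Xs i) /\ is_adjoint ip (Y i) (Ys i)) ->
  sphere_relations n q X Y Xs Ys ->
  (forall i v, (1 <= i)%N -> (i < n)%N -> X i v = 0) ->
  irreducible_family ip
    (fun k : nat * nat => if (1 <= k.2 <= n)%N then gens X Y Xs Ys k else id) ->
  (exists v, X n v != 0) ->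
  (forall v w, X n v = X n w -> v = w) /\
  (exists xi : V, xi != 0 /\ forall i, (1 <= i <= n)%N -> Y i xi = 0).
Proof.
move=> n1 q0 q1 [Hip Hcomp] Hops Hrel Hx0 Hirr Hnz.
case: Hrel => r1 [r2 [r3 [r4 [r5 [r6 [r7 [r8 [r9 [r10 [r11 r12]]]]]]]]]].
have hQ : ((q%:C)%C : R[i]) != 0 := Q_neq0 q0.
have hnn : (1 <= n <= n)%N by rewrite n1 leqnn.
have rng : forall i, (1 <= i)%N -> (i < n)%N -> (1 <= i <= n)%N.
  by move=> i h1 h2; rewrite h1 ltnW.
have linX : forall i, (1 <= i <= n)%N -> forall (a : R[i]) x y, X i (a *: x + y) = a *: X i x + X i y.
  by move=> i hi; case: (Hops i hi) => [[[h _] _ _ _] _].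
have linY : forall i, (1 <= i <= n)%N -> forall (a : R[i]) x y, Y i (a *: x + y) = a *: Y i x + Y i y.
  by move=> i hi; case: (Hops i hi) => [[_ [h _] _ _] _].
have linXs : forall i, (1 <= i <= n)%N -> forall (a : R[i]) x y, Xs i (a *: x + y) = a *: Xs i x + Xs i y.
  by move=> i hi; case: (Hops i hi) => [[_ _ [h _] _] _].
have linYs : forall i, (1 <= i <= n)%N -> forall (a : R[i]) x y, Ys i (a *: x + y) = a *: Ys i x + Ys i y.
  by move=> i hi; case: (Hops i hi) => [[_ _ _ [h _]] _].
have adjX : forall i, (1 <= i <= n)%N -> is_adjoint ip (X i) (Xs i).
  by move=> i hi; case: (Hops i hi) => [_ [h _]].
have adjY : forall i, (1 <= i <= n)%N -> is_adjoint ip (Y i) (Ys i).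
  by move=> i hi; case: (Hops i hi) => [_ [_ h]].
have Xs0 : forall i v, (1 <= i)%N -> (i < n)%N -> Xs i v = 0.
  move=> i v h1 h2; apply: (nn_eq0 Hip).
  by rewrite /nn -(adjX i (rng i h1 h2)) (Hx0 i _ h1 h2) (ip0l Hip).
have Hnorm : forall v, Xs n (X n v) + \sum_(1 <= i < n.+1) Ys i (Y i v) = v.
  move=> v.
  have e0 : \sum_(1 <= i < n) Xs i (X i v) = 0.
    apply: sum_lt_zero => k h1 h2; exact: Xs0.
  by have := r12 v; rewrite big_split /= big_nat_recr //= e0 add0r.
have Hnormal : forall v, X n (Xs n v) = Xs n (X n v).
  move=> v; rewrite r5 // sum_lt_zero ?scaler0 ?addr0 // => k h1 h2.
  by rewrite (Hx0 k v h1 h2) (lin0 (linXs k (rng k h1 h2))).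
have Hyz : forall i v, (1 <= i)%N -> (i < n)%N -> Y i (X n v) = (q%:C)%C *: X n (Y i v).
  move=> i v h1 h2; rewrite r3 ?(rng i h1 h2) //; last by rewrite eq_sym ltn_eqF.
  by rewrite scalerA mulfV // scale1r.
have Hzsy : forall i w, (1 <= i)%N -> (i < n)%N -> X n (Ys i w) = (q%:C)%C *: Ys i (X n w).
  move=> i w h1 h2; rewrite r11 // (Hx0 i w h1 h2) (lin0 (linYs n hnn)) !scaler0 addr0 //.
have Hynz : forall v, Y n (X n v) = (q%:C)%C ^+ 2 *: X n (Y n v).
  move=> v; rewrite r4 // sum_lt_zero ?scaler0 ?addr0 // => k h1 h2.
  by rewrite (Hx0 k (Y k v) h1 h2) scaler0.
have Hzsyn : forall w, X n (Ys n w) = (q%:C)%C ^+ 2 *: Ys n (X n w).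
  by move=> w; rewrite r7.
have Hsum : forall v, nn ip v = nn ip (X n v) + \sum_(1 <= i < n.+1) nn ip (Y i v).
  move=> v.
  have h : ip v v = ip (Xs n (X n v) + \sum_(1 <= i < n.+1) Ys i (Y i v)) v by rewrite Hnorm.
  rewrite (ipDl Hip) (ip_sum_l Hip) (adjS Hip (adjX n hnn)) in h.
  have hs : \sum_(1 <= i < n.+1) ip (Ys i (Y i v)) v = \sum_(1 <= i < n.+1) ip (Y i v) (Y i v).
    apply: eq_big_nat => i /andP[h1 h2].
    have hi : (1 <= i <= n)%N by rewrite h1 -ltnS.
    by rewrite (adjS Hip (adjY i hi)).
  by rewrite /nn h hs cReD cRe_sum.
have P1 : forall w, nn ip (X n w) <= nn ip w.
  move=> w; rewrite (Hsum w) lerDl; apply: sumr_ge0 => i _; exact: nn_ge0.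
have hterm : forall i v, (1 <= i <= n)%N ->
    cRe (ip (X n (Ys i (Y i v))) (X n v)) = (if (i < n)%N then q ^+ 2 else q ^+ 4) * nn ip (X n (Y i v)).
  move=> i v hi; case/andP: (hi) => h1 h2.
  case: ltnP => hin.
    rewrite (Hzsy i _ h1 hin) (ipZl Hip) (adjS Hip (adjY i hi)) (Hyz i v h1 hin) (ipZr Hip).
    by rewrite cRe_real2.
  have ein : i = n by apply/eqP; rewrite eqn_leq h2 hin.
  subst i.
  rewrite Hzsyn (ipZl Hip) (adjS Hip (adjY n hi)) Hynz (ipZr Hip) realX2 cRe_real2.
  by rewrite -exprM.
have GAP : forall b, 0 <= b -> (forall w, nn ip (X n w) <= b * nn ip w) ->
    forall v, nn ip (X n v) - nn ip (X n (X n v)) <= q ^+ 2 * b * (nn ip v - nn ip (X n v)).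
  move=> b b0 hb v.
  have hB : \sum_(1 <= i < n.+1) Ys i (Y i v) = v - Xs n (X n v).
    apply/eqP; rewrite eq_sym subr_eq addrC; apply/eqP; by rewrite Hnorm.
  have e1 : cRe (ip (X n (\sum_(1 <= i < n.+1) Ys i (Y i v))) (X n v))
      = nn ip (X n v) - nn ip (X n (X n v)).
    rewrite hB (linB (linX n hnn)) (ipBl Hip) cReB Hnormal.
    by rewrite (adjS Hip (adjX n hnn)).
  have e2 : cRe (ip (X n (\sum_(1 <= i < n.+1) Ys i (Y i v))) (X n v))
      = \sum_(1 <= i < n.+1) (if (i < n)%N then q ^+ 2 else q ^+ 4) * nn ip (X n (Y i v)).
    rewrite (lin_sum (linX n hnn)) (ip_sum_l Hip) cRe_sum.
    apply: eq_big_nat => i hi; exact: hterm.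
  rewrite -e1 e2 (Hsum v) addrAC subrr add0r mulr_sumr.
  apply: ler_sum_nat => i hi.
  have hY := hb (Y i v).
  have hn0 := nn_ge0 Hip (X n (Y i v)).
  have hn1 := nn_ge0 Hip (Y i v).
  have hq2 : 0 <= q ^+ 2 by rewrite sqr_ge0.
  have hq4 : q ^+ 4 <= q ^+ 2 by rewrite ler_wiXn2l // ltW.
  have hc : 0 <= (if (i < n)%N then q ^+ 2 else q ^+ 4) <= q ^+ 2.
    by case: ifP => _; rewrite ?lexx ?hq4 ?exprn_ge0 // ltW.
  case/andP: hc => hc0 hc1.
  set c := (if _ then _ else _) in hc0 hc1 *.
  have : c * nn ip (X n (Y i v)) <= c * (b * nn ip (Y i v)) by rewrite ler_wpM2l.
  have : c * (b * nn ip (Y i v)) <= q ^+ 2 * (b * nn ip (Y i v)).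
    by rewrite ler_wpM2r // mulr_ge0.
  rewrite -mulrA. lra.
have Hnz' : exists v, X n v != 0 := Hnz.
have [xi [xi0 hxi]] := core_exists Hip Hcomp q0 q1 (linX n hnn) (linXs n hnn) (adjX n hnn)
  Hnormal P1 GAP Hnz'.
split; last first.
  exists xi; split => // i hi.
  have hs := Hsum xi; rewrite hxi -{1}[nn ip xi]addr0 in hs.
  move/addrI/esym/eqP: hs; rewrite psumr_eq0; last by move=> j _; exact: nn_ge0.
  move/allP => /(_ i); rewrite mem_index_iota ltnS => /(_ hi) /= /eqP.
  exact: nn_eq0.
have hbX := (Hops n hnn).1. case: hbX => [[_ [M HM]] _ _ _].
set W := fun x => X n x = 0.
have hW : closed_subspace ip W.
  split; first exact: (lin0 (linX n hnn)).
    by move=> a x y; rewrite /W (linX n hnn) => -> ->; rewrite scaler0 addr0.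
  move=> u l hu hl; rewrite /W; apply: (hn_eq0 Hip).
  apply/eqP; rewrite eq_le hn_ge0 andbT.
  apply/ler_addgt0Pr => e e0; rewrite add0r.
  have hM : 0 < `|M| + 1 by rewrite ltr_wpDl.
  have [N hN] := hl _ (divr_gt0 e0 hM).
  have h1 := hN N (leqnn N).
  have h2 := HM (u N - l).
  rewrite (linB (linX n hnn)) hu sub0r in h2.
  rewrite !hnE (hnN Hip) (hn_sym Hip) in h1 h2.
  have h3 : M * hn ip (l - u N) <= `|M| * hn ip (l - u N) by rewrite ler_wpM2r ?hn_ge0 // ler_norm.
  have h4 : `|M| * hn ip (l - u N) <= `|M| * (e / (`|M| + 1)).
    by rewrite ler_wpM2l // ltW.
  have h5 : `|M| * (e / (`|M| + 1)) <= e.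
    rewrite mulrA ler_pdivrMr // mulrDr mulr1; lra.
  lra.
have hinv : forall k x, W x -> W ((fun k : nat * nat => if (1 <= k.2 <= n)%N then gens X Y Xs Ys k else id) k x).
  move=> [a i] x; rewrite /W /= => hx.
  case: ifP => hi //.
  case/andP: (hi) => h1 h2.
  rewrite /gens /=.
  have [hin|] := ltnP i n; last first.
    move=> hni; have ein : i = n by apply/eqP; rewrite eqn_leq h2 hni.
    subst i.
    case: a => [|[|[|a]]].
    - by rewrite hx (lin0 (linX n hnn)).
    - have := Hynz x; rewrite hx (lin0 (linY n hnn)) => /esym /eqP.
      by rewrite scaler_eq0 expf_eq0 (negbTE hQ) andbF /= => /eqP.
    - by rewrite Hnormal hx (lin0 (linXs n hnn)).
    - by rewrite Hzsyn hx (lin0 (linYs n hnn)) scaler0.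
  case: a => [|[|[|a]]].
  - by rewrite (Hx0 i x h1 hin) (lin0 (linX n hnn)).
  - have := Hyz i x h1 hin; rewrite hx (lin0 (linY i hi)) => /esym /eqP.
    by rewrite scaler_eq0 (negbTE hQ) /= => /eqP.
  - by rewrite (Xs0 i x h1 hin) (lin0 (linX n hnn)).
  - by rewrite (Hzsy i x h1 hin) hx (lin0 (linYs i hi)) scaler0.
case: (Hirr W hW hinv) => [Hker|Hall].
  move=> v w hvw; apply/eqP; rewrite -subr_eq0; apply/eqP; apply: Hker.
  by rewrite /W (linB (linX n hnn)) hvw subrr.
by case: Hnz => v; rewrite (Hall v) eqxx.
Qed.
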